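(* Let $k\ge 0$ be an integer and let $g_{-k}<\dots<g_{-1}<g_0<g_1<\dots<g_k$ be the zeros of the Legendre polynomial $L_{2k+1}$ of degree $2k+1$ on $[-1,1]$, so that $g_{-i}=-g_i$ and $g_0=0$. Let $\hat v$ be a polynomial on $\hat K=[-1,1]^2$ whose restriction to each of the four edges of $\hat K$ is a polynomial (in the edge variable) of degree $\le 2k+1$. Then $$\sum_{i=-k}^{k}\gamma_i\big(\hat v(1,g_i)+\hat v(-1,g_i)\big)=\sum_{i=-k}^{k}\gamma_i\big(\hat v(g_i,1)+\hat v(g_i,-1)\big),$$ where, setting $g_{-(k+1)}:=-1$ and $g_{k+1}:=1$, $$\gamma_i=\prod_{\substack{j=-(k+1)\\ j\neq i}}^{k}\frac{1-g_j}{g_i-g_j}+\prod_{\substack{j=-k\\ j\ne i}}^{k+1}\frac{-1-g_j}{g_i-g_j},\qquad i=-k,\dots,k,$$ and these numbers satisfy $$\gamma_i=\frac{2}{g_i^2}\prod_{\substack{j=1\\ j\neq |i|}}^{k}\frac{1-g_j^2}{g_i^2-g_j^2}\quad (i\neq 0),\qquad \gamma_0=4\prod_{j=1}^{k}\frac{g_j^2-1}{g_j^2}.$$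
   Context: $\hat K=[-1,1]^2$ is the reference square with coordinates $(\hat x,\hat y)$. $L_n$ denotes the Legendre polynomial of degree $n$ on $[-1,1]$. Empty products equal $1$. *)

(* Defs.v *)
From HB Require Import structures.
From mathcomp Require Import all_boot all_order all_algebra.
Set Implicit Arguments. Unset Strict Implicit. Unset Printing Implicit Defensive.
Import Order.TTheory GRing.Theory Num.Theory.
Local Open Scope ring_scope.

Section Defs.
Variable R : realFieldType.

(* legendre_pair n = (L_n, L_{n+1}), via Bonnet's recursion
   (n+2) L_{n+2} = (2n+3) X L_{n+1} - (n+1) L_n, with L_0 = 1, L_1 = X. *)
Fixpoint legendre_pair (n : nat) : {poly R} * {poly R} :=
  match n with
  | 0 => (1, 'X)
  | n'.+1 =>
      let: (a, b) := legendre_pair n' in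
      (b, (n'.+2)%:R^-1 *: ((n'.*2.+3)%:R *: ('X * b) - (n'.+1)%:R *: a))
  end.

Definition legendre (n : nat) : {poly R} := (legendre_pair n).1.

(* Bivariate polynomials: v : {poly {poly R}}; the outer variable is y and the
   inner (coefficient) variable is x, so  v(x,y) = (v.[y%:P]).[x]. *)
Definition eval2 (v : {poly {poly R}}) (x y : R) : R := (v.[y%:P]).[x].

Definition restr_x (v : {poly {poly R}}) (c : R) : {poly R} :=
  map_poly (fun q : {poly R} => q.[c]) v.
Definition restr_y (v : {poly {poly R}}) (c : R) : {poly R} := v.[c%:P].

Definition zlen (a b : int) : nat :=
  match (b + 1 - a)%R with Posz n => n | Negz _ => 0%N end.

Definition zsum (a b : int) (F : int -> R) : R :=
  \sum_(t < zlen a b) F (a + t%:Z).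
Definition zprod (a b : int) (P : pred int) (F : int -> R) : R :=
  \prod_(t < zlen a b | P (a + t%:Z)) F (a + t%:Z).

Definition gext (k : nat) (g : int -> R) (j : int) : R :=
  if j == - (k.+1)%:Z then -1 else if j == (k.+1)%:Z then 1 else g j.

Definition gamma (k : nat) (g : int -> R) (i : int) : R :=
  zprod (- (k.+1)%:Z) k%:Z (fun j => j != i)
        (fun j => (1 - gext k g j) / (gext k g i - gext k g j))
+ zprod (- k%:Z) (k.+1)%:Z (fun j => j != i)
        (fun j => (-1 - gext k g j) / (gext k g i - gext k g j)).

End Defs.

(* Main.v *)
Require Import Defs.
From HB Require Import structures.
From mathcomp Require Import all_boot all_order all_algebra.
From mathcomp Require Import ring lra zify.
Import Order.TTheory GRing.Theory Num.Theory.
Local Open Scope ring_scope.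


Section Leg.
Variable R : realFieldType.

Lemma lp_one n : ((legendre_pair R n).1.[1] = 1) /\ ((legendre_pair R n).2.[1] = 1).
Proof.
elim: n => [|n [IH1 IH2]] /=; first by rewrite hornerC hornerX.
case E: (legendre_pair R n) IH1 IH2 => [a b] /= IH1 IH2; split => //.
rewrite !(hornerZ, hornerD, hornerN, hornerM, hornerX) IH1 IH2.
have h : (n.+2)%:R != 0 :> R by rewrite pnatr_eq0.
by apply: (mulfI h); rewrite mulrA divff // mul1r !mulr1 -natrB ?mulr_natl ?mulr1n //; [congr (GRing.natmul _ _); rewrite -addnn; lia | rewrite -addnn; lia].
Qed.

Lemma lp_odd n x : ((legendre_pair R n).1.[-x] = (-1)^+n * (legendre_pair R n).1.[x])
  /\ ((legendre_pair R n).2.[-x] = (-1)^+n.+1 * (legendre_pair R n).2.[x]).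
Proof.
elim: n => [|n [IH1 IH2]] /=.
  by rewrite !hornerC !hornerX expr1 mulN1r expr0 mul1r.
case E: (legendre_pair R n) IH1 IH2 => [a b] /= IH1 IH2; split => //.
rewrite !(hornerZ, hornerD, hornerN, hornerM, hornerX) IH1 IH2 !exprS; ring.
Qed.

Lemma lp_size n : (size (legendre_pair R n).1 <= n.+1)%N /\ (size (legendre_pair R n).2 <= n.+2)%N.
Proof.
elim: n => [|n [IH1 IH2]] /=.
  by rewrite size_polyC size_polyX; case: (1 != 0).
case E: (legendre_pair R n) IH1 IH2 => [a b] /= IH1 IH2; split => //.
apply: leq_trans (size_scale_leq _ _) _.
apply: leq_trans (size_polyD _ _) _; rewrite geq_max size_polyN; apply/andP; split.
  apply: leq_trans (size_scale_leq _ _) _.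
  apply: leq_trans (size_polyMleq _ _) _; rewrite size_polyX /=; lia.
apply: leq_trans (size_scale_leq _ _) _; by apply: (leq_trans IH1); rewrite ltnW ?ltnS ?leqnSn.
Qed.

Lemma leg1 n : (legendre R n).[1] = 1. Proof. exact: (lp_one n).1. Qed.
Lemma legN n x : (legendre R n).[-x] = (-1)^+n * (legendre R n).[x].
Proof. exact: (lp_odd n x).1. Qed.
Lemma leg_size n : (size (legendre R n) <= n.+1)%N. Proof. exact: (lp_size n).1. Qed.
End Leg.


Definition zr (a b : int) : seq int := [seq a + t%:Z | t <- iota 0 (zlen a b)].

Lemma zlenE a b : a <= b + 1 -> (zlen a b)%:Z = b + 1 - a.
Proof. rewrite /zlen; case E: (b + 1 - a) => [n|n] //; lia. Qed.

Lemma zlen0 a b : b + 1 <= a -> zlen a b = 0%N.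
Proof. rewrite /zlen; case E: (b + 1 - a) => [n|n] //; lia. Qed.

Lemma zsumE (R : realFieldType) a b (F : int -> R) : zsum a b F = \sum_(j <- zr a b) F j.
Proof.
rewrite /zr; have -> : iota 0 (zlen a b) = index_iota 0 (zlen a b) by rewrite /index_iota subn0.
by rewrite /zsum big_map big_mkord.
Qed.

Lemma zprodE (R : realFieldType) a b P (F : int -> R) :
  zprod a b P F = \prod_(j <- zr a b | P j) F j.
Proof.
rewrite /zr; have -> : iota 0 (zlen a b) = index_iota 0 (zlen a b) by rewrite /index_iota subn0.
by rewrite /zprod big_map big_mkord.
Qed.

Lemma mem_zr a b j : (j \in zr a b) = (a <= j <= b).
Proof.
apply/mapP/idP.
  case=> t; rewrite mem_iota /= add0n => ht ->.
  have hab : a <= b + 1 by case: (leP a (b+1)) => // /ltW h; move: ht; rewrite zlen0 //.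
  have := zlenE _ _ hab; lia.
move=> hj; exists `|j - a|%N; last by rewrite gez0_abs; lia.
rewrite mem_iota /= add0n.
have hab : a <= b + 1 by lia.
have := zlenE _ _ hab; lia.
Qed.

Lemma zr_uniq a b : uniq (zr a b).
Proof. rewrite map_inj_uniq ?iota_uniq // => x y /= h; lia. Qed.

Lemma zr_cons a b : a <= b -> zr a b = a :: zr (a + 1) b.
Proof.
move=> hab; rewrite /zr.
have h1 : zlen a b = (zlen (a + 1) b).+1.
  have h2 : a <= b + 1 by lia. have h3 : a + 1 <= b + 1 by lia.
  have := zlenE _ _ h2; have := zlenE _ _ h3; lia.
rewrite h1 /= addr0; congr (_ :: _).
rewrite -(addn0 1%N) iotaDl -map_comp; apply: eq_map => t /=; lia.
Qed.

Lemma zr_rcons a b : a <= b + 1 -> zr a (b + 1) = rcons (zr a b) (b + 1).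
Proof.
move=> hab; rewrite /zr.
have h1 : zlen a (b + 1) = ((zlen a b) + 1)%N.
  have h3 : a <= b + 1 + 1 by lia.
  have := zlenE _ _ hab; have := zlenE _ _ h3; lia.
rewrite h1 iotaD map_cat cats1 /=; congr rcons.
have := zlenE _ _ hab; lia.
Qed.

Lemma size_zr a b : a <= b + 1 -> (size (zr a b))%:Z = b + 1 - a.
Proof. by move=> h; rewrite size_map size_iota zlenE. Qed.


Section Lag.
Variable R : realFieldType.

Lemma size_prod_lin (s : seq int) (P : pred int) (c d : int -> R) :
  (size (\prod_(l <- s | P l) (('X - (c l)%:P) * (d l)%:P))%R <= (count P s).+1)%N.
Proof.
elim: s => [|a s IH]; first by rewrite big_nil size_poly1.
rewrite big_cons /=; case: (P a) => /=; last by rewrite add0n.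
apply: leq_trans (size_polyMleq _ _) _.
have h : (size (('X - (c a)%:P) * (d a)%:P)%R <= 2)%N.
  apply: leq_trans (size_polyMleq _ _) _; rewrite size_XsubC size_polyC.
  by case: (d a != 0).
move: h IH; set m := size _; set n := size _; lia.
Qed.

Lemma my_lagrange (J : seq int) (x : int -> R) (p : {poly R}) (t : R) :
  uniq J -> {in J &, injective x} -> (size p <= size J)%N ->
  p.[t] = \sum_(m <- J) p.[x m] * \prod_(l <- J | l != m) ((t - x l) / (x m - x l)).
Proof.
move=> uJ ix hp.
pose q := p - \sum_(m <- J) p.[x m] *: \prod_(l <- J | l != m)
   (('X - (x l)%:P) * ((x m - x l)^-1)%:P).
have qroot : forall m0, m0 \in J -> q.[x m0] = 0.
  move=> m0 hm0; rewrite /q hornerD hornerN horner_sum (bigD1_seq m0) //=.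
  rewrite [X in _ - (_ + X)]big1_seq ?addr0.
    rewrite hornerZ horner_prod big1_seq ?mulr1 ?subrr // => l /andP[hl lJ].
    rewrite hornerM hornerXsubC hornerC divff // subr_eq0.
    by apply/eqP => /ix => /(_ hm0 lJ) e; move: hl; rewrite e eqxx.
  move=> m /andP[hm mJ]; rewrite hornerZ horner_prod; apply/eqP.
  rewrite mulf_eq0 prodf_seq_eq0; apply/orP; right; apply/hasP; exists m0 => //.
  by rewrite eq_sym hm /= hornerM hornerXsubC hornerC subrr mul0r.
have sq : (size q <= size J)%N.
  apply: leq_trans (size_polyD _ _) _; rewrite geq_max hp size_polyN /=.
  apply: leq_trans (size_sum _ _ _) _; apply/bigmax_leqP_seq => m mJ _.
  apply: leq_trans (size_scale_leq _ _) _.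
  apply: leq_trans (size_prod_lin _ _ _ _) _.
  have := count_predC (pred1 m) J; rewrite count_uniq_mem // mJ.
  have -> : count (predC (pred1 m)) J = count (fun l => l != m) J by [].
  by move=> <-; rewrite /= add1n ltnSn.
have q0 : q = 0.
  apply/eqP; apply: contraT => qn0.
  have := max_poly_roots qn0 (_ : all (root q) (map x J)) (_ : uniq (map x J)).
  rewrite size_map => /(_ _ _) h.
  suff : (size J < size q)%N by rewrite ltnNge sq.
  apply: h; first by apply/allP => y /mapP[m mJ ->]; apply/rootP; exact: qroot.
  by rewrite map_inj_in_uniq.
have : p = \sum_(m <- J) p.[x m] *: \prod_(l <- J | l != m)
   (('X - (x l)%:P) * ((x m - x l)^-1)%:P).
  by apply/eqP; rewrite -subr_eq0 -/q q0.
move=> {1}->; rewrite horner_sum; apply: eq_bigr => m _.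
rewrite hornerZ horner_prod; congr (_ * _); apply: eq_bigr => l _.
by rewrite hornerM hornerXsubC hornerC.
Qed.
End Lag.


Lemma mem_mapN (s : seq int) j : (j \in map -%R s) = (- j \in s).
Proof. by rewrite -{1}(opprK j) mem_map //; exact: oppr_inj. Qed.

Section Main.
Variable R : realFieldType.
Variable k : nat.
Variable g : int -> R.
Hypothesis hroot : forall i : int, - k%:Z <= i <= k%:Z ->
     root (legendre R (k.*2.+1)) (g i).
Hypothesis hmono : forall i j : int, - k%:Z <= i -> i < j -> j <= k%:Z -> g i < g j.

Let Jk := zr (- k%:Z) k%:Z.
Let pos := zr 1 k%:Z.
Let L := legendre R (k.*2.+1).

Lemma inJk i : (i \in Jk) = (- k%:Z <= i <= k%:Z).
Proof. exact: mem_zr. Qed.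

Lemma size_Jk : size Jk = k.*2.+1.
Proof.
have h : - k%:Z <= k%:Z + 1 by lia.
have := size_zr _ _ h; rewrite -/Jk -addnn; lia.
Qed.

Lemma g_lt i j : i \in Jk -> j \in Jk -> g i < g j -> i < j.
Proof.
rewrite !inJk => hi hj hg; case: (ltgtP i j) => // h.
  have h1 : - k%:Z <= j by lia.
  have h2 : i <= k%:Z by lia.
  by have := hmono _ _ h1 h h2; lra.
by move: hg; rewrite h ltxx.
Qed.

Lemma g_inj : {in Jk &, injective g}.
Proof.
move=> i j hi hj e; case: (ltgtP i j) => // h.
  move: hi hj; rewrite !inJk => hi hj; have h1 : - k%:Z <= i by lia.
  have h2 : j <= k%:Z by lia.
  by have := hmono _ _ h1 h h2; rewrite e ltxx.
move: hi hj; rewrite !inJk => hi hj; have h1 : - k%:Z <= j by lia.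
have h2 : i <= k%:Z by lia.
by have := hmono _ _ h1 h h2; rewrite e ltxx.
Qed.

Lemma L1 : L.[1] = 1. Proof. exact: leg1. Qed.
Lemma LN x : L.[- x] = - L.[x].
Proof. by rewrite /L legN -signr_odd /= odd_double /= expr1 mulN1r. Qed.

Lemma L_neq0 : L != 0.
Proof. by apply/eqP => e; have := L1; rewrite e horner0 => /eqP; rewrite eq_sym oner_eq0. Qed.

Lemma g_ne1 i : i \in Jk -> (g i != 1) /\ (g i != -1).
Proof.
rewrite inJk => /hroot /rootP r; split; apply/eqP => e; move: r; rewrite e.
  by rewrite -/L L1 => /eqP; rewrite oner_eq0.
by rewrite -/L LN L1 => /eqP; rewrite oppr_eq0 oner_eq0.
Qed.

Lemma exists_neg i : i \in Jk -> exists2 j, j \in Jk & g j = - g i.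
Proof.
move=> hi; case: (boolP (has (fun j => g j == - g i) Jk)).
  by case/hasP => j hj /eqP e; exists j.
move=> /hasPn hn.
have hu : uniq ((- g i) :: map g Jk).
  rewrite /= map_inj_in_uniq ?zr_uniq ?andbT; last exact: g_inj.
  by apply/mapP => -[j hj e]; have := hn j hj; rewrite -e eqxx.
have hr : all (root L) ((- g i) :: map g Jk).
  rewrite /= rootE LN; move: hi; rewrite inJk => /hroot /rootP -> /=; rewrite oppr0 eqxx /=.
  by apply/allP => y /mapP[j hj ->]; apply: hroot; rewrite -inJk.
have := max_poly_roots L_neq0 hr hu; rewrite /= size_map size_Jk.
have := leg_size R (k.*2.+1); rewrite -/L => a b; exfalso; move: (leq_trans b a); by rewrite ltnn.
Qed.

Lemma upper (n : nat) : (n <= k.*2)%N -> forall j, j \in Jk ->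
  g j = - g (- k%:Z + n%:Z) -> j <= k%:Z - n%:Z.
Proof.
elim: n => [|n IH] hn j hj e.
  by move: hj; rewrite inJk; lia.
have hi0 : (- k%:Z + n%:Z) \in Jk by rewrite inJk; lia.
have [j' hj' e'] := exists_neg _ hi0.
have := IH (ltnW hn) _ hj' e'.
have hlt : g (- k%:Z + n%:Z) < g (- k%:Z + (n.+1)%:Z).
  apply: hmono; lia.
have : j < j' by apply: g_lt => //; rewrite e e'; lra.
lia.
Qed.

Lemma lower (n : nat) : (n <= k.*2)%N -> forall j, j \in Jk ->
  g j = - g (k%:Z - n%:Z) -> - k%:Z + n%:Z <= j.
Proof.
elim: n => [|n IH] hn j hj e.
  by move: hj; rewrite inJk; lia.
have hi0 : (k%:Z - n%:Z) \in Jk by rewrite inJk; lia.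
have [j' hj' e'] := exists_neg _ hi0.
have := IH (ltnW hn) _ hj' e'.
have hlt : g (k%:Z - (n.+1)%:Z) < g (k%:Z - n%:Z).
  apply: hmono; lia.
have : j' < j by apply: g_lt => //; rewrite e e'; lra.
lia.
Qed.

Lemma gN i : i \in Jk -> g (- i) = - g i.
Proof.
move=> hi; have [j hj e] := exists_neg _ hi.
have hi' := hi; rewrite inJk in hi'.
have h1 : (absz (i + k%:Z)%R <= k.*2)%N by rewrite -addnn; lia.
have h2 : (absz (k%:Z - i)%R <= k.*2)%N by rewrite -addnn; lia.
have u := upper _ h1 _ hj; have l := lower _ h2 _ hj.
rewrite gez0_abs in u; last by lia.
rewrite gez0_abs in l; last by lia.
have e1 : - k%:Z + (i + k%:Z) = i by lia.
have e2 : k%:Z - (k%:Z - i) = i by lia.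
rewrite e1 in u; rewrite e2 in l.
have -> : - i = j by have := u e; have := l e; lia.
exact: e.
Qed.

Lemma g0 : g 0 = 0.
Proof.
have h0 : (0 : int) \in Jk by rewrite inJk; lia.
have := gN _ h0; rewrite oppr0 => /eqP; rewrite -subr_eq0 opprK -mulr2n mulrn_eq0 /=.
by move/eqP.
Qed.

Lemma perm_Jk : perm_eq Jk (0 :: pos ++ map -%R pos).
Proof.
apply: uniq_perm; first exact: zr_uniq.
  rewrite /= cat_uniq (map_inj_uniq (@oppr_inj _)) zr_uniq /=.
  rewrite andbT mem_cat mem_mapN !mem_zr /=.
  apply/hasPn => j; rewrite mem_mapN !mem_zr => hj. lia.
by move=> j; rewrite inJk in_cons mem_cat mem_mapN !mem_zr; lia.
Qed.

Lemma DL (F : int -> R) : \prod_(l <- Jk) F l = F 0 * \prod_(j <- pos) (F j * F (- j)).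
Proof. rewrite (perm_big _ perm_Jk) big_cons big_cat big_split; congr (_ * (_ * _)); rewrite big_map //. Qed.

Lemma DL0 (F : int -> R) : \prod_(l <- Jk | l != 0) F l = \prod_(j <- pos) (F j * F (- j)).
Proof.
rewrite big_mkcond DL eqxx mul1r big_seq [RHS]big_seq; apply: eq_bigr => j.
by rewrite mem_zr => hj; rewrite ifT ?ifT //; lia.
Qed.

Lemma DLi (F : int -> R) i : i \in Jk -> i != 0 ->
  \prod_(l <- Jk | l != i) F l =
  F 0 * F (- i) * \prod_(j <- pos | j != `|i|) (F j * F (- j)).
Proof.
rewrite inJk => hi hi0; rewrite big_mkcond DL ifT; last by rewrite eq_sym.
rewrite -mulrA; congr (_ * _).
have ai : `|i| \in pos by rewrite mem_zr; lia.
rewrite (bigD1_seq _ ai (zr_uniq _ _)) /=; congr (_ * _).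
  case: (ltgtP 0 i) => h.
  - have -> : `|i| = i by lia.
    by rewrite eqxx mul1r ifT //; lia.
  - have -> : `|i| = - i by lia.
    by rewrite opprK eqxx mulr1 ifT //; lia.
  - by move: hi0; rewrite -h eqxx.
rewrite big_seq_cond [RHS]big_seq_cond; apply: eq_bigr => j /andP[].
by rewrite mem_zr => hj hja; rewrite !ifT //; lia.
Qed.

Lemma gextE j : j \in Jk -> gext k g j = g j.
Proof. by rewrite inJk /gext => hj; rewrite !ifF //; lia. Qed.
Lemma gextm : gext k g (- (k.+1)%:Z) = -1.
Proof. by rewrite /gext eqxx. Qed.
Lemma gextp : gext k g (k.+1)%:Z = 1.
Proof. rewrite /gext; case: eqP => [h|_]; [exfalso; lia | by rewrite eqxx]. Qed.

Lemma Jp_eq : zr (- (k.+1)%:Z) k%:Z = - (k.+1)%:Z :: Jk.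
Proof.
rewrite zr_cons; last by lia.
by have -> : - (k.+1)%:Z + 1 = - k%:Z by lia.
Qed.

Lemma Jm_eq : zr (- k%:Z) (k.+1)%:Z = rcons Jk (k.+1)%:Z.
Proof.
have -> : (k.+1)%:Z = k%:Z + 1 by lia.
by rewrite zr_rcons //; lia.
Qed.

Lemma g_nz i : i \in Jk -> i != 0 -> g i != 0.
Proof.
move=> hi hi0; apply/eqP => e; move/negP: hi0; apply; apply/eqP.
by apply: g_inj => //; [rewrite inJk; lia | rewrite e g0].
Qed.

Lemma gm1 i : i \in Jk -> g i - 1 != 0.
Proof. by move/g_ne1 => [h _]; rewrite subr_eq0. Qed.
Lemma gp1 i : i \in Jk -> g i + 1 != 0.
Proof. by move/g_ne1 => [_ h]; rewrite addr_eq0. Qed.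

Lemma gp_eq m : m \in Jk ->
  zprod (- (k.+1)%:Z) k%:Z (fun j => j != m)
        (fun j => (1 - gext k g j) / (gext k g m - gext k g j))
  = (1 - -1) / (g m - -1) * \prod_(l <- Jk | l != m) ((1 - g l) / (g m - g l)).
Proof.
move=> hm; rewrite zprodE Jp_eq big_cons ifT; last by move: hm; rewrite inJk; lia.
rewrite gextm gextE //; congr (_ * _).
by rewrite big_seq_cond [RHS]big_seq_cond; apply: eq_bigr => l /andP[hl _]; rewrite gextE.
Qed.

Lemma gm_eq m : m \in Jk ->
  zprod (- k%:Z) (k.+1)%:Z (fun j => j != m)
        (fun j => (-1 - gext k g j) / (gext k g m - gext k g j))
  = \prod_(l <- Jk | l != m) ((-1 - g l) / (g m - g l)) * ((-1 - 1) / (g m - 1)).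
Proof.
move=> hm; rewrite zprodE Jm_eq big_rcons ifT; last by move: hm; rewrite inJk; lia.
rewrite gextp gextE //; congr (_ * _).
by rewrite big_seq_cond [RHS]big_seq_cond; apply: eq_bigr => l /andP[hl _]; rewrite gextE.
Qed.

Lemma pos_Jk j : j \in pos -> j \in Jk.
Proof. by rewrite mem_zr inJk; lia. Qed.
Lemma pos_Jk' j : j \in pos -> - j \in Jk.
Proof. by rewrite mem_zr inJk; lia. Qed.

Lemma Aplus : \prod_(l <- Jk) ((1 - g l) / (-1 - g l)) = -1.
Proof.
rewrite DL g0 !subr0 invrN invr1 mulrN1 big_seq big1 ?mulr1 // => j /pos_Jk hj.
rewrite gN // mulf_div.
have -> : (-1 - g j) * (-1 - - g j) = (1 - g j) * (1 - - g j) by ring.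
apply: divff; rewrite mulf_neq0 //; first by rewrite subr_eq0 eq_sym; case: (g_ne1 _ hj).
by rewrite opprK addrC; exact: gp1.
Qed.

Lemma Aminus : \prod_(l <- Jk) ((-1 - g l) / (1 - g l)) = -1.
Proof.
rewrite DL g0 !subr0 divr1 big_seq big1 ?mulr1 // => j /pos_Jk hj.
rewrite gN // mulf_div.
have -> : (-1 - g j) * (-1 - - g j) = (1 - g j) * (1 - - g j) by ring.
apply: divff; rewrite mulf_neq0 //; first by rewrite subr_eq0 eq_sym; case: (g_ne1 _ hj).
by rewrite opprK addrC; exact: gp1.
Qed.

Lemma gamma_i i : - k%:Z <= i <= k%:Z -> i != 0 ->
  gamma k g i = 2 / (g i) ^+ 2 *
    zprod 1 k%:Z (fun j => j != `|i|)
      (fun j => (1 - (g j) ^+ 2) / ((g i) ^+ 2 - (g j) ^+ 2)).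
Proof.
rewrite -inJk => hi hi0; rewrite /gamma gp_eq // gm_eq // !DLi // zprodE.
set P := \prod_(j <- zr 1 k | j != `|i|) ((1 - g j ^+ 2) / (g i ^+ 2 - g j ^+ 2)).
have e1 : \prod_(j <- pos | j != `|i|)
     ((1 - g j) / (g i - g j) * ((1 - g (- j)) / (g i - g (- j)))) = P.
  rewrite /P big_seq_cond [RHS]big_seq_cond; apply: eq_bigr => j /andP[hj _].
  by rewrite gN ?pos_Jk // mulf_div; congr (_ / _); ring.
have e2 : \prod_(j <- pos | j != `|i|)
     ((-1 - g j) / (g i - g j) * ((-1 - g (- j)) / (g i - g (- j)))) = P.
  rewrite /P big_seq_cond [RHS]big_seq_cond; apply: eq_bigr => j /andP[hj _].
  by rewrite gN ?pos_Jk // mulf_div; congr (_ / _); ring.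
rewrite e1 e2 g0 gN //.
have h1 := g_nz _ hi hi0; have h2 := gm1 _ hi; have h3 := gp1 _ hi.
field.
rewrite h1 h2 h3 andbT /= opprK; have -> : g i + g i = 2 * g i by ring.
by rewrite mulf_neq0 // pnatr_eq0.
Qed.

Lemma gamma_0 : gamma k g 0 = 4 * zprod 1 k%:Z predT
           (fun j => ((g j) ^+ 2 - 1) / (g j) ^+ 2).
Proof.
have h0 : (0:int) \in Jk by rewrite inJk; lia.
rewrite /gamma gp_eq // gm_eq // !DL0 zprodE.
set P := \prod_(j <- zr 1 k | predT j) ((g j ^+ 2 - 1) / g j ^+ 2).
have e1 : \prod_(j <- pos)
     ((1 - g j) / (g 0 - g j) * ((1 - g (- j)) / (g 0 - g (- j)))) = P.
  rewrite /P big_seq [RHS]big_seq_cond; apply: eq_big => [j|j hj]; first by rewrite andbT.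
  rewrite gN ?pos_Jk // g0 mulf_div.
  have -> : (0 - g j) * (0 - - g j) = - (g j ^+ 2) by ring.
  by rewrite invrN mulrN -mulNr; congr (_ * _); ring.
have e2 : \prod_(j <- pos)
     ((-1 - g j) / (g 0 - g j) * ((-1 - g (- j)) / (g 0 - g (- j)))) = P.
  rewrite /P big_seq [RHS]big_seq_cond; apply: eq_big => [j|j hj]; first by rewrite andbT.
  rewrite gN ?pos_Jk // g0 mulf_div.
  have -> : (0 - g j) * (0 - - g j) = - (g j ^+ 2) by ring.
  by rewrite invrN mulrN -mulNr; congr (_ * _); ring.
rewrite e1 e2 g0.
by field.
Qed.

Lemma injp : {in - (k.+1)%:Z :: Jk &, injective (gext k g)}.
Proof.
move=> a b; rewrite !in_cons => /orP[/eqP->|ha] /orP[/eqP->|hb] //;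
  rewrite ?gextm ?gextE //.
- by move=> e; case: (g_ne1 _ hb); rewrite -e eqxx.
- by move=> e; case: (g_ne1 _ ha); rewrite e eqxx.
- exact: g_inj.
Qed.

Lemma injm : {in rcons Jk (k.+1)%:Z &, injective (gext k g)}.
Proof.
move=> a b; rewrite !mem_rcons !in_cons => /orP[/eqP->|ha] /orP[/eqP->|hb] //;
  rewrite ?gextp ?gextE //.
- by move=> e; case: (g_ne1 _ hb); rewrite -e eqxx.
- by move=> e; case: (g_ne1 _ ha); rewrite e eqxx.
- exact: g_inj.
Qed.

Lemma quad (p : {poly R}) : (size p <= k.*2.+2)%N ->
  zsum (- k%:Z) k%:Z (fun i => gamma k g i * p.[g i]) = 2 * (p.[1] + p.[-1]).
Proof.
move=> sp.
set Sp := \sum_(m <- Jk) p.[g m] * \prod_(l <- (- (k.+1)%:Z) :: Jk | l != m)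
   ((1 - gext k g l) / (gext k g m - gext k g l)).
set Sm := \sum_(m <- Jk) p.[g m] * \prod_(l <- rcons Jk (k.+1)%:Z | l != m)
   ((-1 - gext k g l) / (gext k g m - gext k g l)).
have hP : p.[1] = p.[-1] * (-1) + Sp.
  rewrite (my_lagrange _ _ _ p 1 (_ : uniq _) injp); first last.
  - by rewrite /= size_Jk.
  - by rewrite -Jp_eq zr_uniq.
  rewrite big_cons gextm; congr (_ + _).
    rewrite big_cons eqxx /=; congr (_ * _).
    transitivity (\prod_(l <- Jk) ((1 - g l) / (-1 - g l))); last exact: Aplus.
    rewrite big_seq_cond [RHS]big_seq; apply: eq_big => [l|l /andP[hl _]].
      by case: (boolP (l \in Jk)) => //=; rewrite inJk => h; lia.
    by rewrite gextE.
  by rewrite /Sp big_seq [RHS]big_seq; apply: eq_bigr => m hm; rewrite gextE.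
have hM : p.[-1] = Sm + p.[1] * (-1).
  rewrite (my_lagrange _ _ _ p (-1) (_ : uniq _) injm); first last.
  - by rewrite size_rcons size_Jk.
  - by rewrite -Jm_eq zr_uniq.
  rewrite big_rcons /= gextp; congr (_ + _).
    by rewrite /Sm big_seq [RHS]big_seq; apply: eq_bigr => m hm; rewrite gextE.
  rewrite big_rcons eqxx /= mulr1; congr (_ * _).
  transitivity (\prod_(l <- Jk) ((-1 - g l) / (1 - g l))); last exact: Aminus.
  rewrite big_seq_cond [RHS]big_seq; apply: eq_big => [l|l /andP[hl _]].
    by case: (boolP (l \in Jk)) => //=; rewrite inJk => h; lia.
  by rewrite gextE.
have -> : zsum (- k%:Z) k%:Z (fun i => gamma k g i * p.[g i]) = Sp + Sm.
  rewrite zsumE /Sp /Sm -big_split; apply: eq_bigr => i _.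
  by rewrite /gamma !zprodE Jp_eq Jm_eq mulrDl; congr (_ + _); rewrite mulrC.
lra.
Qed.
End Main.

Theorem mainTheorem1 (R : realFieldType) (k : nat) (g : int -> R)
  (hroot : forall i : int, - k%:Z <= i <= k%:Z ->
     root (legendre R (k.*2.+1)) (g i))
  (hmono : forall i j : int, - k%:Z <= i -> i < j -> j <= k%:Z -> g i < g j)
  (v : {poly {poly R}})
  (hx1 : (size (restr_x v 1) <= k.*2.+2)%N)
  (hxm1 : (size (restr_x v (-1)) <= k.*2.+2)%N)
  (hy1 : (size (restr_y v 1) <= k.*2.+2)%N)
  (hym1 : (size (restr_y v (-1)) <= k.*2.+2)%N) :
  zsum (- k%:Z) k%:Z
    (fun i => gamma k g i * (eval2 v 1 (g i) + eval2 v (-1) (g i)))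
  = zsum (- k%:Z) k%:Z
    (fun i => gamma k g i * (eval2 v (g i) 1 + eval2 v (g i) (-1)))
  /\ (forall i : int, - k%:Z <= i <= k%:Z -> i != 0 ->
       gamma k g i = 2 / (g i) ^+ 2 *
         zprod 1 k%:Z (fun j => j != `|i|)
           (fun j => (1 - (g j) ^+ 2) / ((g i) ^+ 2 - (g j) ^+ 2)))
  /\ gamma k g 0 = 4 * zprod 1 k%:Z predT
           (fun j => ((g j) ^+ 2 - 1) / (g j) ^+ 2).
Proof.
have ex c y : eval2 v c y = (restr_x v c).[y].
  rewrite /eval2 /restr_x.
  have e : horner_eval c y%:P = y := hornerC y c.
  have := horner_map (horner_eval c) v y%:P.
  move=> h; symmetry; apply: etrans _ h.
  congr (horner _ _); exact: (esym e).
have lin (p q : {poly R}) : (size p <= k.*2.+2)%N -> (size q <= k.*2.+2)%N ->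
  zsum (- k%:Z) k%:Z (fun i => gamma k g i * (p.[g i] + q.[g i]))
  = 2 * (p.[1] + p.[-1]) + 2 * (q.[1] + q.[-1]).
  move=> hp hq; rewrite -(quad _ _ _ hroot hmono _ hp) -(quad _ _ _ hroot hmono _ hq) !zsumE -big_split.
  by apply: eq_bigr => i _; rewrite mulrDr.
split; last split.
- transitivity (zsum (- k%:Z) k%:Z
    (fun i => gamma k g i * ((restr_x v 1).[g i] + (restr_x v (-1)).[g i]))).
    by rewrite !zsumE; apply: eq_bigr => i _; rewrite !ex.
  transitivity (zsum (- k%:Z) k%:Z
    (fun i => gamma k g i * ((restr_y v 1).[g i] + (restr_y v (-1)).[g i]))); last by [].
  rewrite !lin // -!ex /restr_y /eval2; ring.
- by move=> i hi hi0; exact: (gamma_i _ _ _ hroot hmono _ hi hi0).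
- exact: (gamma_0 _ _ _ hroot hmono).
Qed.
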